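(* Let $q=p^h$ with $p$ prime, $h\geq 1$, and let $c$ be a codeword of minimum weight of $C(PG(2,q))^\perp$. If $p=7$, then $wt(c)\geq (12q+6)/7$. If $p>7$, then $wt(c)\geq (12q+18)/7$. No divisibility assumption on $wt(c)$ is required.
   Context: $C(PG(2,q))$ is the $\mathbb{F}_p$-span of the incidence vectors of the lines of $PG(2,q)$, with coordinates indexed by points. $C^\perp$ is its dual with respect to the standard scalar product over $\mathbb{F}_p$. The weight is the number of nonzero coordinates. *)

(* Defs.v *)
From HB Require Import structures.
From mathcomp Require Import all_boot all_order all_algebra all_field.
Set Implicit Arguments. Unset Strict Implicit. Unset Printing Implicit Defensive.
Import GRing.Theory.
Local Open Scope ring_scope.

(* Standard model of PG(2,q) over a finite field F (|F| = q): points and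
   lines are both represented by nonzero vectors of F^3 normalised so that
   their first nonzero coordinate is 1 (one representative per 1-dim
   subspace); point x is on line l iff x . l = 0. *)
Definition normalized (F : finFieldType) (v : 'rV[F]_3) : bool :=
  [exists i : 'I_3, (v 0 i == 1) && [forall j : 'I_3, (j < i)%N ==> (v 0 j == 0)]].

Definition pg_point (F : finFieldType) := {v : 'rV[F]_3 | normalized v}.
Definition pg_line (F : finFieldType) := {v : 'rV[F]_3 | normalized v}.

Definition incident (F : finFieldType) (x : pg_point F) (l : pg_line F) : bool :=
  \sum_(i < 3) (val x) 0 i * (val l) 0 i == 0.

Notation word F p := {ffun pg_point F -> 'F_p}.

Definition inc_vec (F : finFieldType) (p : nat) (l : pg_line F) : word F p :=
  [ffun x => (incident x l)%:R].

Definition in_code (F : finFieldType) (p : nat) (c : word F p) : Prop :=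
  exists a : {ffun pg_line F -> 'F_p}, forall x : pg_point F, c x = \sum_(l : pg_line F) a l * inc_vec p l x.

Definition dotw (F : finFieldType) (p : nat) (c d : word F p) : 'F_p :=
  \sum_(x : pg_point F) c x * d x.

Definition in_dual (F : finFieldType) (p : nat) (c : word F p) : Prop :=
  forall d : word F p, in_code d -> dotw c d = 0.

Definition wt (F : finFieldType) (p : nat) (c : word F p) : nat :=
  #|[set x | c x != 0]|.

Definition min_weight_dual (F : finFieldType) (p : nat) (c : word F p) : Prop :=
  [/\ in_dual c, c != 0 & forall d : word F p, in_dual d -> d != 0 -> (wt c <= wt d)%N].

(* Main.v *)
Require Import Defs.
From HB Require Import structures.
From mathcomp Require Import all_boot all_order all_algebra all_field.
Set Implicit Arguments. Unset Strict Implicit. Unset Printing Implicit Defensive.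
Import GRing.Theory.
Local Open Scope ring_scope.

Lemma normalized_scale_eq (F : finFieldType) (u v : 'rV[F]_3) (a : F) :
  normalized u -> normalized v -> v = a *: u -> v = u.
Proof.
move=> /existsP[i /andP[/eqP ui /forallP u0]] /existsP[j /andP[/eqP vj /forallP v0]] vau.
have ev k : v 0 k = a * u 0 k by rewrite vau mxE.
case: (ltngtP i j) => [lij|lji|eij].
- have := v0 i; rewrite lij /= ev ui mulr1 => /eqP a0.
  by move: vj; rewrite ev a0 mul0r => /eqP; rewrite eq_sym oner_eq0.
- have := u0 j; rewrite lji /= => /eqP uj0.
  by move: vj; rewrite ev uj0 mulr0 => /eqP; rewrite eq_sym oner_eq0.
- have eij' : i = j by apply: val_inj.
  subst j; move: vj; rewrite ev ui mulr1 => a1.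
  by rewrite vau a1 scale1r.
Qed.

Lemma normalized_neq0 (F : finFieldType) (u : 'rV[F]_3) : normalized u -> u != 0.
Proof.
move=> /existsP[i /andP[/eqP ui _]]; apply/eqP=> u0.
by move: ui; rewrite u0 mxE => /eqP; rewrite eq_sym oner_eq0.
Qed.

Lemma rank2_of_neq (F : finFieldType) (u v : 'rV[F]_3) :
  normalized u -> normalized v -> u != v -> \rank (col_mx u v) = 2%N.
Proof.
move=> nu nv uv.
have ru : \rank u = 1%N by rewrite rank_rV normalized_neq0.
have le2 : (\rank (col_mx u v) <= 2)%N by apply: (leq_trans (rank_leq_row _)).
have sub : (u <= col_mx u v)%MS by rewrite -addsmxE addsmxSl.
have := mxrank_leqif_sup sub; rewrite ru => h.
case: (ltngtP (\rank (col_mx u v)) 2) le2 => // lt2 _.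
have : (1 <= \rank (col_mx u v) <= 1)%N.
  by rewrite h.1 -ltnS lt2.
move=> /andP[_ h2].
have e : (1 = \rank (col_mx u v))%N by apply/eqP; rewrite eqn_leq h2 h.1.
have sub2 : (col_mx u v <= u)%MS by rewrite -h.2; exact/eqP.
have : (v <= u)%MS.
  by apply: submx_trans sub2; rewrite -addsmxE addsmxSr.
case/submxP => D vD.
have : v = D 0 0 *: u.
  by rewrite vD; apply/rowP=> k; rewrite !mxE big_ord1.
move/(normalized_scale_eq nu nv) => e'.
by move: uv; rewrite e' eqxx.
Qed.

Lemma incident_mx (F : finFieldType) (x : pg_point F) (l : pg_line F) :
  incident x l -> val l *m (val x)^T = 0.
Proof.
move=> /eqP h; apply/matrixP=> i j; rewrite !ord1 !mxE.
rewrite -[RHS]h; apply: eq_bigr=> k _; rewrite !mxE mulrC //.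
Qed.

Lemma unique_line (F : finFieldType) (x y : pg_point F) (l l' : pg_line F) :
  x != y -> l != l' -> incident x l -> incident y l -> incident x l' -> incident y l' -> False.
Proof.
move=> xy ll xl yl xl' yl'.
have xy' : val x != val y by apply: contra xy => /eqP/val_inj ->.
have ll' : val l != val l' by apply: contra ll => /eqP/val_inj ->.
have rA := rank2_of_neq (valP x) (valP y) xy'.
have rL := rank2_of_neq (valP l) (valP l') ll'.
set A := col_mx (val x) (val y).
have k1 : (val l <= kermx A^T)%MS.
  apply/sub_kermxP; rewrite tr_col_mx mul_mx_row.
  by rewrite !incident_mx // row_mx0.
have k2 : (val l' <= kermx A^T)%MS.
  apply/sub_kermxP; rewrite tr_col_mx mul_mx_row.
  by rewrite !incident_mx // row_mx0.
have : (col_mx (val l) (val l') <= kermx A^T)%MS by rewrite col_mx_sub k1 k2.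
move/mxrankS; rewrite mxrank_ker mxrank_tr rA rL //.
Qed.

Definition i1 : 'I_3 := @Ordinal 3 1 isT.
Definition i2 : 'I_3 := @Ordinal 3 2 isT.

Definition nrm (F : finFieldType) (v : 'rV[F]_3) : 'rV[F]_3 :=
  if v 0 ord0 != 0 then (v 0 ord0)^-1 *: v
  else if v 0 i1 != 0 then (v 0 i1)^-1 *: v else (v 0 i2)^-1 *: v.

Lemma ord3P (j : 'I_3) : [\/ j = ord0, j = i1 | j = i2].
Proof.
case: j => [[|[|[|m]]] hm].
- by apply: Or31; apply: val_inj.
- by apply: Or32; apply: val_inj.
- by apply: Or33; apply: val_inj.
- by [].
Qed.

Lemma nrm_spec (F : finFieldType) (v : 'rV[F]_3) : v != 0 ->
  normalized (nrm v) /\ exists2 k, k != 0 & nrm v = k *: v.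
Proof.
move=> v0; rewrite /nrm.
case: ifP => [h0|/negbFE/eqP h0].
  split; last by exists (v 0 ord0)^-1; rewrite ?invr_eq0.
  apply/existsP; exists ord0; rewrite mxE mulVf // eqxx /=.
  by apply/forallP=> j.
case: ifP => [h1|/negbFE/eqP h1].
  split; last by exists (v 0 i1)^-1; rewrite ?invr_eq0.
  apply/existsP; exists i1; rewrite mxE mulVf // eqxx /=.
  apply/forallP=> j; apply/implyP=> hj.
  have -> : j = ord0 by apply: val_inj; move: hj; rewrite /= ltnS leqn0 => /eqP.
  by rewrite mxE h0 mulr0.
have h2 : v 0 i2 != 0.
  apply: contra v0 => /eqP h2; apply/eqP/rowP=> j; rewrite mxE.
  by case: (ord3P j) => ->.
split; last by exists (v 0 i2)^-1; rewrite ?invr_eq0.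
apply/existsP; exists i2; rewrite mxE mulVf // eqxx /=.
apply/forallP=> j; apply/implyP=> hj.
by case: (ord3P j) hj => -> //; rewrite mxE ?h0 ?h1 mulr0.
Qed.

Lemma indep2 (F : finFieldType) (B : 'M[F]_(2,3)) (a b : F) :
  row_free B -> a *: row ord0 B + b *: row ord_max B = 0 -> a = 0 /\ b = 0.
Proof.
move=> fB e.
have : (\row_(i < 2) (if i == ord0 then a else b)) *m B = 0 *m B.
  rewrite mul0mx mulmx_sum_row big_ord_recl big_ord1 !mxE /=.
  have -> : lift ord0 ord0 = ord_max :> 'I_2 by apply: val_inj.
  exact: e.
move/(row_free_inj fB)/rowP => h.
by split; [have := h ord0 | have := h ord_max]; rewrite !mxE.
Qed.

Lemma kerP_incident (F : finFieldType) (P : pg_point F) (l : pg_line F) :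
  (val l <= kermx (val P)^T)%MS -> incident P l.
Proof.
move/sub_kermxP/matrixP => /(_ 0 0); rewrite !mxE => h.
by apply/eqP; rewrite -[RHS]h; apply: eq_bigr => k _; rewrite !mxE mulrC.
Qed.

Lemma lines_through (F : finFieldType) (P : pg_point F) :
  (#|F|.+1 <= #|[set l : pg_line F | incident P l]|)%N.
Proof.
set K := kermx (val P)^T.
have rP : \rank (val P)^T = 1%N by rewrite mxrank_tr rank_rV normalized_neq0 // (valP P).
have rK : \rank K = 2%N by rewrite /K mxrank_ker rP.
have [B [fB sB]] : exists B : 'M[F]_(2,3), row_free B /\ (B <= K)%MS.
  move: (row_base_free K) (eq_row_base K).
  move: (row_base K); rewrite rK => B fB eB.
  by exists B; split => //; rewrite eB.
set u := row ord0 B; set v := row ord_max B.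
pose g (o : option F) := if o is Some t then u + t *: v else v.
have gK o : (g o <= K)%MS.
  by case: o => [t|] /=; rewrite ?addmx_sub ?scalemx_sub ?(submx_trans (row_sub _ _) sB).
have g0 o : g o != 0.
  case: o => [t|] /=; apply/eqP => e.
    have h := indep2 (a:=1) (b:=t) fB; rewrite scale1r in h.
    by case: (h e) => /eqP; rewrite oner_eq0.
  have h := indep2 (a:=0) (b:=1) fB; rewrite scale1r scale0r add0r in h.
  by case: (h e) => _ /eqP; rewrite oner_eq0.
pose f o : pg_line F := insubd (P : pg_line F) (nrm (g o)).
have fE o : val (f o) = nrm (g o) by rewrite /f insubdK //; case: (nrm_spec (g0 o)).
have finj : injective f.
  move=> o o' /(congr1 val); rewrite !fE.
  case: (nrm_spec (g0 o)) => _ [k k0 ->]; case: (nrm_spec (g0 o')) => _ [k' k0' ->].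
  case: o => [t|]; case: o' => [t'|] //= e.
  - have : (k - k') *: u + (k * t - k' * t') *: v = 0.
      move: e; rewrite !scalerDr !scalerA => e.
      by rewrite !scalerBl addrACA -opprD e subrr.
    move/(indep2 fB) => [/eqP]; rewrite subr_eq0 => /eqP kk.
    subst k'; move/eqP; rewrite -mulrBr mulf_eq0 (negbTE k0) /= subr_eq0 => /eqP -> //.
  - have : k *: u + (k * t - k') *: v = 0.
      move: e; rewrite !scalerDr !scalerA => e.
      by rewrite scalerBl addrA e subrr.
    by move/(indep2 fB) => [k00 _]; move: k0; rewrite k00 eqxx.
  - have : k' *: u + (k' * t' - k) *: v = 0.
      move: e; rewrite !scalerDr !scalerA => e.
      by rewrite scalerBl addrA -e subrr.
    by move/(indep2 fB) => [k00 _]; move: k0'; rewrite k00 eqxx.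
have <- : #|[set f o | o : option F]| = #|F|.+1 by rewrite card_imset // card_option.
apply: subset_leq_card; apply/subsetP=> l /imsetP[o _ ->]; rewrite inE.
apply: kerP_incident; rewrite fE.
by case: (nrm_spec (g0 o)) => _ [k _ ->]; rewrite scalemx_sub.
Qed.
Lemma swap_sum (F : finFieldType) (y : pg_point F) (f : pg_point F -> nat) :
 (\sum_(l : pg_line F | incident y l) \sum_(x : pg_point F | incident x l) f x
 = \sum_x f x * #|[set l : pg_line F | incident y l && incident x l]|)%N.
Proof.
rewrite (exchange_big_dep predT) //=; apply: eq_bigr => x _.
by rewrite sum_nat_const mulnC cardsE.
Qed.

Lemma Fp_lt p (pp : prime p) (x : 'F_p) : (val x < p)%N.
Proof. by have /leq_trans := ltn_ord x; apply; rewrite Fp_cast. Qed.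

Lemma Fp_natr p (x : 'F_p) : (val x)%:R = x.
Proof. exact: natr_Zp. Qed.

Lemma Fp_dvd p (pp : prime p) n : (p %| n)%N = (n%:R == 0 :> 'F_p).
Proof. by rewrite (dvdn_pcharf (pchar_Fp pp)). Qed.

Lemma Fp_val0 p (x : 'F_p) : (val x == 0%N) = (x == 0).
Proof. by []. Qed.

Lemma Fp_val1 p (pp : prime p) : val (1 : 'F_p) = 1%N.
Proof. by rewrite /= modn_small. Qed.

Lemma Fp_valN1 p (pp : prime p) : val (-1 : 'F_p) = p.-1.
Proof.
set y := val (-1 : 'F_p).
have h : (p %| y.+1)%N.
  by rewrite Fp_dvd // -[y.+1]addn1 natrD Fp_natr addNr.
have := Fp_lt pp (-1); rewrite -/y => hy.
have := dvdn_leq (ltn0Sn _) h => hy2.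
have : y.+1 = p by apply/eqP; rewrite eqn_leq hy hy2.
by move=> <-.
Qed.

Lemma Fp_sum p (I : finType) (P : pred I) (f : I -> 'F_p) :
  (\sum_(i | P i) val (f i))%:R = \sum_(i | P i) f i.
Proof. by rewrite natr_sum; apply: eq_bigr => i _; rewrite Fp_natr. Qed.

From mathcomp Require Import zify.
Local Close Scope ring_scope.

Theorem mainTheorem20 (p h : nat) (F : finFieldType) (c : word F p) :
  prime p -> (1 <= h)%N -> #|F| = (p ^ h)%N -> min_weight_dual c ->
  (p = 7 -> (12 * p ^ h + 6 <= 7 * wt c)%N) /\
  (7 < p -> (12 * p ^ h + 18 <= 7 * wt c)%N)%N.
Proof.
Local Open Scope ring_scope.
move=> pp h1 hF [cd c0 _].
rewrite -hF.
have p2 : (2 <= p)%N by apply: prime_gt1.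
have qp : (p <= #|F|)%N.
  by rewrite hF -{1}(expn1 p) leq_pexp2l // ltnW.
set q := #|F|.
set S := [set x | c x != 0].
have wE : wt c = #|S| by [].
rewrite wE.
have lsum (l : pg_line F) : \sum_(x | incident x l) c x = 0.
  have := cd (inc_vec p l) _.
  rewrite /dotw.
  have -> : \sum_x c x * inc_vec p l x = \sum_(x | incident x l) c x.
    rewrite [RHS]big_mkcond; apply: eq_bigr => x _; rewrite ffunE.
    by case: (incident x l); rewrite ?mulr1 ?mulr0.
  apply; exists [ffun l' => ((l' == l) : nat)%:R] => x.
  rewrite (bigD1 l) //= !ffunE eqxx mul1r big1 ?addr0 // => l' /negbTE.
  by rewrite ffunE => ->; rewrite mul0r.
have [P cP] : exists P, c P != 0.
  case: (pickP (fun x => c x != 0)) => [P cPP|hc]; first by exists P.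
  case/eqP: c0; apply/ffunP => x; rewrite !ffunE.
  by have := hc x => /negbFE/eqP.
have PS : P \in S by rewrite inE.
pose N y := #|[set l : pg_line F | incident y l]|.
pose kk y x := #|[set l : pg_line F | incident y l && incident x l]|.
have hN y : (q.+1 <= N y)%N by apply: lines_through.
have hk y x : x != y -> (kk y x <= 1)%N.
  move=> xy; rewrite leqNgt; apply/negP => /card_gt1P[l [l' [hl hl' ll']]].
  move: hl hl'; rewrite !inE => /andP[yl xl] /andP[yl' xl'].
  exact: (unique_line xy ll' xl yl xl' yl').
have kkN y : kk y y = N y by apply: eq_card => l; rewrite !inE andbb.
have dec y (f : pg_point F -> nat) :
  (\sum_(l : pg_line F | incident y l) \sum_(x : pg_point F | incident x l) f x
   = f y * N y + \sum_(x | x != y) f x * kk y x)%N.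
  by rewrite swap_sum (bigD1 y) //= -/(kk y y) kkN.
have decb y (f : pg_point F -> nat) :
  (\sum_(x | x != y) f x * kk y x <= \sum_(x | x != y) f x)%N.
  apply: leq_sum => x xy; rewrite -{2}(muln1 (f x)) leq_mul2l hk ?orbT //.
pose s (l : pg_line F) := (\sum_(x | incident x l) (x \in S : nat))%N.
have sumS y : y \in S -> #|S| = (\sum_(x | x != y) (x \in S : nat)).+1%N.
  move=> yS; rewrite -sum1_card [LHS]big_mkcond [LHS](bigD1 y) //= yS add1n; congr _.+1.
case: (boolP [exists l : pg_line F, incident P l && (s l <= 2)%N]); last first.
  rewrite negb_exists => /forallP hs.
  have h3 : (3 * N P <= \sum_(l : pg_line F | incident P l) s l)%N.
    rewrite /N -sum1_card big_distrr /= [X in (X <= _)%N](eq_bigl (fun l => incident P l)); last by move=> l; rewrite inE.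
    apply: leq_sum => l Pl; have := hs l; rewrite Pl /= -ltnNge muln1 //.
  have := dec P (fun x => (x \in S : nat)); rewrite -/(s _) /= PS mul1n.
  move: (decb P (fun x => (x \in S : nat))) (sumS P PS) (hN P) => /= d1 d2 d3 d4.
  have : (\sum_(l : pg_line F | incident P l) s l = \sum_(l | incident P l) \sum_(x | incident x l) (x \in S : nat))%N by [].
  move=> d5.
  move: h3 d1 d2 d3 d4 d5.
  move: (\sum_(l | incident P l) s l)%N (\sum_(l | incident P l) \sum_(x | incident x l) (x \in S : nat))%N.
  move: (\sum_(x | x != P) (x \in S : nat) * kk P x)%N (\sum_(x | x != P) (x \in S : nat))%N (N P) #|S|.
  move=> *; split => _; lia.
case/existsP => l /andP[Pl sl].
have [R [RS cR RP]] : exists R, [/\ R \in S, c R = - c P & R != P].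
  set A := [set x | incident x l && (x \in S)].
  have sA : #|A| = s l.
    rewrite /s -sum1_card [LHS]big_mkcond [RHS]big_mkcond; apply: eq_bigr => x _.
    by rewrite inE; case: (incident x l); case: (x \in S).
  have PA : P \in A by rewrite inE Pl PS.
  have sumA : \sum_(x in A) c x = 0.
    rewrite -[RHS](lsum l) [RHS]big_mkcond [LHS]big_mkcond; apply: eq_bigr => x _.
    rewrite inE; case: (incident x l) => //=.
    by case: (boolP (x \in S)) => //; rewrite inE negbK => /eqP ->.
  move: sumA; rewrite (big_setD1 P PA) /=.
  have : (#|A :\ P| <= 1)%N by have := cardsD1 P A; rewrite PA sA; lia.
  rewrite leq_eqVlt ltnS leqn0 => /orP[/cards1P[R eR]| /eqP/cards0_eq e0].
  - rewrite eR big_set1 => /eqP; rewrite addr_eq0 => /eqP cPR.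
    have : R \in A :\ P by rewrite eR set11.
    rewrite !inE => /andP[RnP /andP[_ RS]].
    by exists R; split => //; rewrite ?inE // cPR opprK.
  - by rewrite e0 big_set0 addr0 => cP0; move: cP; rewrite cP0 eqxx.
pose lam := (c P)^-1.
pose psi x := val (lam * c x).
have psiP : psi P = 1%N by rewrite /psi mulVf // Fp_val1.
have psiR : psi R = p.-1 by rewrite /psi cR mulrN mulVf // Fp_valN1.
have psiS x : (psi x <= p.-1 * (x \in S))%N.
  case: (boolP (x \in S)) => xS; rewrite ?muln1 ?muln0.
    by rewrite -ltnS prednK ?prime_gt0 // Fp_lt.
  by move: xS; rewrite inE negbK /psi => /eqP ->; rewrite mulr0.
pose G (l : pg_line F) := (\sum_(x | incident x l) psi x)%N.
have Gdvd l' : (p %| G l')%N.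
  by rewrite Fp_dvd // /G Fp_sum -mulr_sumr lsum mulr0.
have I1 : (p * N P <= N P + \sum_(x | x != P) psi x)%N.
  have : (\sum_(l' | incident P l') p <= \sum_(l' | incident P l') G l')%N.
    apply: leq_sum => l' Pl'; apply: dvdn_leq (Gdvd l').
    by rewrite /G (bigD1 P) //= psiP.
  rewrite sum_nat_const (dec P psi) psiP mul1n.
  have -> : #|[pred l' | incident P l']| = N P by rewrite /N cardsE.
  by rewrite mulnC => /leq_trans; apply; rewrite leq_add2l decb.
have II1 l' : incident R l' -> (G l' + p <= p * s l')%N.
  move=> Rl'.
  have hG : (G l' <= p.-1 * s l')%N.
    by rewrite /s big_distrr; apply: leq_sum => x _; apply: psiS.
  have hs : (1 <= s l')%N by rewrite /s (bigD1 R) //= RS.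
  case/dvdnP: (Gdvd l') => m hm; rewrite hm; rewrite hm in hG.
  have : (m * p < s l' * p)%N.
    apply: (leq_ltn_trans hG); rewrite mulnC ltn_pmul2l //.
    by rewrite prednK ?prime_gt0 // ltnSn.
  rewrite ltn_pmul2r ?prime_gt0 // => hms.
  by rewrite -mulSnr mulnC leq_pmul2l ?prime_gt0.
have II2 : (\sum_(l' | incident R l') G l' + N R * p <= p * \sum_(l' | incident R l') s l')%N.
  have -> : (N R * p = \sum_(l' | incident R l') p)%N by rewrite sum_nat_const /N cardsE.
  rewrite -big_split big_distrr; apply: leq_sum => l' Rl'; exact: II1.
have II3 : (\sum_(x | x != R) psi x + p * \sum_(x | x != R) (x \in S : nat) * kk R x
           <= \sum_(x | x != R) psi x * kk R x + p * \sum_(x | x != R) (x \in S : nat))%N.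
  rewrite !big_distrr -!big_split; apply: leq_sum => x xR /=.
  move: (hk R x xR) (psiS x); case: (kk R x) => [|[|n]] //= _.
  - by case: (x \in S) => /=; lia.
  - by case: (x \in S) => /=; lia.
have T1 : (psi P + \sum_(x | x != P) psi x = psi R + \sum_(x | x != R) psi x)%N.
  have e1 : (\sum_x psi x = psi P + \sum_(x | x != P) psi x)%N by rewrite (bigD1 P).
  have e2 : (\sum_x psi x = psi R + \sum_(x | x != R) psi x)%N by rewrite (bigD1 R).
  by rewrite -e1 -e2.
move: II2; rewrite /G (dec R psi) /s (dec R (fun x => (x \in S : nat))) /= RS psiR mul1n.
have d1 := sumS R RS; have d2 := hN P; have d3 := hN R.
rewrite psiP psiR in T1.
have p11 : (7 < p)%N -> (11 <= p)%N.
  move=> h7; rewrite leqNgt; apply/negP => h10.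
  have : p = 8%N \/ p = 9%N \/ p = 10%N by lia.
  by case=> [|[|]] e; rewrite e in pp.
move: I1 II3 T1 d1 d2 d3 p11.
move: (\sum_(x | x != P) psi x)%N (\sum_(x | x != R) psi x)%N (\sum_(x | x != R) psi x * kk R x)%N.
move: (\sum_(x | x != R) (x \in S : nat) * kk R x)%N (\sum_(x | x != R) (x \in S : nat))%N (N P) (N R) #|S|.
move=> Yk W NP NR w X B A I1 II3 T1 d1 d2 d3 p11 II2.
have e1 : (p.-1 * NR + NR = p * NR)%N by rewrite -mulSnr prednK ?prime_gt0.
have e2 : (p.-1 * NP + NP = p * NP)%N by rewrite -mulSnr prednK ?prime_gt0.
have e3 : (p.-1 + 1 = p)%N by rewrite addn1 prednK ?prime_gt0.
have e4 : (p * (NR + Yk) = p * NR + p * Yk)%N by rewrite mulnDr.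
have e5 : (p * (NP + NR) = p * NP + p * NR)%N by rewrite mulnDr.
have e6 : (p.-1 * (NP + NR) = p.-1 * NP + p.-1 * NR)%N by rewrite mulnDr.
have e7 : (p * w = p * W + p)%N by rewrite d1 mulnSr.
have e8 : (NR * p = p * NR)%N by rewrite mulnC.
have key : ((p.-1) * (NP + NR) + 2 <= p * w)%N.
  rewrite e6 e7; move: e1 e2 e3 e4 e8 I1 II3 T1 II2.
  move: (p.-1 * NR)%N (p.-1 * NP)%N (p * NR)%N (p * NP)%N (p * (NR + Yk))%N (p * Yk)%N (p * W)%N (p.-1) (NR * p)%N.
  move=> *; lia.
have key2 : ((p.-1) * (q.+1 + q.+1) <= (p.-1) * (NP + NR))%N by rewrite leq_mul2l; apply/orP; right; lia.
split => hp.
  subst p; lia.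
have h11 := p11 hp.
have H : (p.-1 * (q.+1 + q.+1) + 2 <= p * w)%N by lia.
have ep : p.-1 = (p - 1)%N by rewrite subn1.
rewrite ep in H.
move: H h11 qp; rewrite -/q; clear -p2.
move=> H h11 qp.
rewrite leqNgt; apply/negP => hc.
have hc' : (p * (7 * w) < p * (12 * q + 18))%N by rewrite ltn_pmul2l ?hc //; lia.
nia.
Qed.
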